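(* Let $\mathcal{S}=\{1,\dots,K\}$ be a finite set of settings. For each $i\in\mathcal{S}$ suppose $Y^i=\theta^iD^i+f^i(X^i,A^i)+\varepsilon^i$ with $E[\varepsilon^i\mid D^i,X^i,A^i]=0$ ($D^i$ real-valued treatment, $X^i$ observed, $A^i$ unobserved covariates), let $\theta^i_s$ be the short-regression parameter omitting $A^i$, let $B^i=\theta^i_s-\theta^i$, and assume $B^i\in[\nu^i_l,\nu^i_u]$ for known $\nu^i_l\le\nu^i_u$. For every pair $(j,k)$ assume $B^j=\rho^{jk}B^k$ with $\rho^{jk}\in[\rho^{jk}_l,\rho^{jk}_u]$, $0<\rho^{jk}_l\le1\le\rho^{jk}_u$ known. Define $\mathcal{I}^i=[\theta^i_s-\nu^i_u,\theta^i_s-\nu^i_l]$, $c^{jk}_l,c^{jk}_u$ as the min and max of $\{(\rho^{jk}_l-1)\nu^k_l,(\rho^{jk}_u-1)\nu^k_l,(\rho^{jk}_l-1)\nu^k_u,(\rho^{jk}_u-1)\nu^k_u\}$, and $\mathcal{I}^D_{jk}=[(\theta^j_s-\theta^k_s)-c^{jk}_u,(\theta^j_s-\theta^k_s)-c^{jk}_l]$. Then the true vector $(\theta^1,\dots,\theta^K)$ belongs to the polytope \[ \mathcal{J}=\{(\theta^1,\dots,\theta^K):\theta^i\in\mathcal{I}^i\ \forall i,\ \theta^j-\theta^k\in\mathcal{I}^D_{jk}\ \forall (j,k)\}, \] which is defined by at most $2K+K(K-1)$ linear inequality constraints in $K$ unknowns. The marginal identified set for any $\theta^i$ is the interval $[\underline{\theta}^i,\overline{\theta}^i]$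 with $\underline{\theta}^i=\min_{\mathcal{J}}\theta^i$ and $\overline{\theta}^i=\max_{\mathcal{J}}\theta^i$, each of which is the solution of a linear program.
   Context: The long parameter is $\theta^i=E[Y^i\alpha^i]$ with $\alpha^i=(D^i-E[D^i\mid X^i,A^i])/E[(D^i-E[D^i\mid X^i,A^i])^2]$, and the short parameter is $\theta^i_s=E[Y^i\alpha^i_s]$ with $\alpha^i_s=(D^i-E[D^i\mid X^i])/E[(D^i-E[D^i\mid X^i])^2]$. The marginal identified set for $\theta^i$ is the projection of $\mathcal{J}$ onto the $i$-th coordinate. *)

(* Defs.v *)
From mathcomp Require Import all_boot all_order all_algebra.
From mathcomp Require Import reals.
Set Implicit Arguments. Unset Strict Implicit. Unset Printing Implicit Defensive.
Import Order.TTheory GRing.Theory Num.Theory.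
Local Open Scope ring_scope.

(* Settings are indexed by 'I_K (= {1,...,K} shifted to {0,...,K-1}).
   Vectors (theta^1,...,theta^K) are functions 'I_K -> R. *)

Section Defs.
Variables (R : realType) (K : nat).
Variables (thetas : 'I_K -> R)
          (nul nuu : 'I_K -> R)
          (rhol rhou : 'I_K -> 'I_K -> R).

Definition c_l (j k : 'I_K) : R :=
  Num.min (Num.min ((rhol j k - 1) * nul k) ((rhou j k - 1) * nul k))
          (Num.min ((rhol j k - 1) * nuu k) ((rhou j k - 1) * nuu k)).
Definition c_u (j k : 'I_K) : R :=
  Num.max (Num.max ((rhol j k - 1) * nul k) ((rhou j k - 1) * nul k))
          (Num.max ((rhol j k - 1) * nuu k) ((rhou j k - 1) * nuu k)).

Definition in_I (i : 'I_K) (x : R) : Prop :=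
  thetas i - nuu i <= x <= thetas i - nul i.

Definition in_ID (j k : 'I_K) (x : R) : Prop :=
  (thetas j - thetas k) - c_u j k <= x <= (thetas j - thetas k) - c_l j k.

Definition J (t : 'I_K -> R) : Prop :=
  (forall i, in_I i (t i)) /\
  (forall j k, j != k -> in_ID j k (t j - t k)).

End Defs.

(* Main.v *)
Require Import Defs.
From mathcomp Require Import all_boot all_order all_algebra.
From mathcomp Require Import reals classical_sets ring lra zify.
Import Order.TTheory GRing.Theory Num.Theory.
Local Open Scope ring_scope.

Lemma lin_bnd (R : realType) (a b r c : R) : a <= r <= b ->
  Num.min (c * a) (c * b) <= c * r <= Num.max (c * a) (c * b).
Proof.
move=> /andP[h1 h2]; have [c0|c0] := leP 0 c.
  have e1 : c * a <= c * r by nra.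
  have e2 : c * r <= c * b by nra.
  by rewrite ge_min e1 le_max e2 orbT.
have e1 : c * r <= c * a by nra.
have e2 : c * b <= c * r by nra.
by rewrite ge_min e2 orbT le_max e1.
Qed.

Lemma bil (R : realType) (a b p q r x : R) : a <= r <= b -> p <= x <= q ->
  Num.min (Num.min ((a - 1) * p) ((b - 1) * p)) (Num.min ((a - 1) * q) ((b - 1) * q))
  <= (r - 1) * x <=
  Num.max (Num.max ((a - 1) * p) ((b - 1) * p)) (Num.max ((a - 1) * q) ((b - 1) * q)).
Proof.
move=> hr hx.
have hr' : a - 1 <= r - 1 <= b - 1 by move: hr => /andP[? ?]; apply/andP; split; lra.
have /andP[l1 u1] := @lin_bnd _ _ _ _ (x) hr'.
have /andP[la ua] := @lin_bnd _ _ _ _ (a - 1) hx.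
have /andP[lb ub] := @lin_bnd _ _ _ _ (b - 1) hx.
rewrite ![x * _]mulrC in l1 u1.
set M := Num.min _ _; set N := Num.max _ _.
have m1 : M <= (a - 1) * p /\ M <= (b-1) * p /\ M <= (a-1) * q /\ M <= (b-1)*q.
  by rewrite /M !ge_min !lexx !orbT.
have n1 : (a - 1) * p <= N /\ (b-1) * p <= N /\ (a-1) * q <= N /\ (b-1)*q <= N.
  by rewrite /N !le_max !lexx !orbT.
case: m1 => [m1 [m2 [m3 m4]]]; case: n1 => [n1 [n2 [n3 n4]]].
apply/andP; split.
  apply: le_trans l1; rewrite le_min; apply/andP; split.
    by apply: le_trans la; rewrite le_min m1 m3.
  by apply: le_trans lb; rewrite le_min m2 m4.
apply: le_trans u1 _; rewrite ge_max; apply/andP; split.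
  by apply: le_trans ua _; rewrite ge_max n1 n3.
by apply: le_trans ub _; rewrite ge_max n2 n4.
Qed.

Lemma sum_delta (R : realType) (K : nat) (j : 'I_K) (t : 'I_K -> R) :
  \sum_(c < K) (c == j)%:R * t c = t j.
Proof.
rewrite (bigD1 j) //= eqxx mul1r big1 ?addr0 // => c /negbTE ->.
by rewrite mul0r.
Qed.

Section Rows.
Variables (R : realType) (K : nat) (thetas nul nuu : 'I_K -> R)
  (rhol rhou : 'I_K -> 'I_K -> R).

Definition T2 := ('I_K + 'I_K + 'I_K * 'I_K.-1)%type.

Definition rowdata (x : T2) : ('I_K -> R) * R :=
  match x with
  | inl (inl i) => (fun c => - (c == i)%:R, - (thetas i - nuu i))
  | inl (inr i) => (fun c => (c == i)%:R, thetas i - nul i)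
  | inr (j, m) => let k := lift j m in
      (fun c => (c == j)%:R - (c == k)%:R,
       Num.min (thetas j - thetas k - c_l nul nuu rhol rhou j k)
               (- ((thetas k - thetas j) - c_u nul nuu rhol rhou k j)))
  end.

Definition rowprop (x : T2) (t : 'I_K -> R) : Prop :=
  match x with
  | inl (inl i) => thetas i - nuu i <= t i
  | inl (inr i) => t i <= thetas i - nul i
  | inr (j, m) => let k := lift j m in
      t j - t k <= thetas j - thetas k - c_l nul nuu rhol rhou j k /\
      (thetas k - thetas j) - c_u nul nuu rhol rhou k j <= t k - t j
  end.

Lemma rowP x t : \sum_(c < K) (rowdata x).1 c * t c <= (rowdata x).2 <-> rowprop x t.
Proof.
case: x => [[i|i]|[j m]] /=.
- rewrite (eq_bigr (fun c => - ((c == i)%:R * t c))); last by move=> c _; rewrite mulNr.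
  by rewrite sumrN sum_delta lerN2.
- by rewrite sum_delta.
- rewrite (eq_bigr (fun c => (c == j)%:R * t c - (c == lift j m)%:R * t c)); last first.
    by move=> c _; rewrite mulrBl.
  rewrite sumrB !sum_delta le_min; split.
    by move=> /andP[h1 h2]; split=> //; lra.
  by case=> h1 h2; apply/andP; split=> //; lra.
Qed.

Lemma J_rows t : J thetas nul nuu rhol rhou t <-> forall x : T2, rowprop x t.
Proof.
split.
  case=> hI hD [[i|i]|[j m]] /=.
  - by have /andP[] := hI i.
  - by have /andP[] := hI i.
  - have hjk : lift j m != j by rewrite eq_sym; exact: neq_lift.
    have /andP[a1 a2] := hD j _ (neq_lift j m).
    have /andP[b1 b2] := hD _ _ (hjk : lift j m != j).
    split=> //; lra.
move=> H; split.
  move=> i; apply/andP; split; [exact: (H (inl (inl i))) | exact: (H (inl (inr i)))].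
move=> j k hjk.
case: (unliftP j k) hjk => [m ->|->] hjk; last by rewrite eqxx in hjk.
have [h1 h2] := H (inr (j, m)).
have [m' em'] : exists m', lift (lift j m) m' = j.
  case: (unliftP (lift j m) j) => [m' e|e]; first by exists m'.
  by rewrite -e eqxx in hjk.
have := H (inr (lift j m, m')); rewrite /rowprop em' => -[h3 h4].
apply/andP; split; lra.
Qed.
End Rows.

Theorem proposition4 (R : realType) (K : nat)
    (theta thetas : 'I_K -> R)
    (nul nuu : 'I_K -> R) (rhol rhou : 'I_K -> 'I_K -> R)
    (* known bounds on the biases *)
    (hnu : forall i, nul i <= nuu i)
    (hB : forall i, nul i <= thetas i - theta i <= nuu i)
    (* known bounds on the relative-bias ratios *)
    (hrho : forall j k, 0 < rhol j k /\ rhol j k <= 1 /\ 1 <= rhou j k)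
    (hBrel : forall j k : 'I_K, exists rho : R,
        rhol j k <= rho <= rhou j k /\
        thetas j - theta j = rho * (thetas k - theta k)) :
  (* the true vector lies in J *)
  J thetas nul nuu rhol rhou theta /\
  (* J is described by at most 2K + K(K-1) linear inequalities *)
  (exists (n : nat) (A : 'I_n -> 'I_K -> R) (b : 'I_n -> R),
      (n <= 2 * K + K * (K - 1))%N /\
      forall t, J thetas nul nuu rhol rhou t <->
                (forall r, \sum_(c < K) A r c * t c <= b r)) /\
  (* marginal identified sets: projections of J are [min_J theta^i, max_J theta^i] *)
  (forall i : 'I_K, exists lo hi : R,
      (exists t, J thetas nul nuu rhol rhou t /\ t i = lo) /\
      (forall t, J thetas nul nuu rhol rhou t -> lo <= t i) /\
      (exists t, J thetas nul nuu rhol rhou t /\ t i = hi) /\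
      (forall t, J thetas nul nuu rhol rhou t -> t i <= hi) /\
      (forall x : R, (exists t, J thetas nul nuu rhol rhou t /\ t i = x) <->
                     lo <= x <= hi)).
Proof.
set JJ := J thetas nul nuu rhol rhou.
have Jtheta : JJ theta.
  split.
    move=> i; have /andP[h1 h2] := hB i; rewrite /in_I; apply/andP; split; lra.
  move=> j k _; have [rho [hr heq]] := hBrel j k.
  have e : theta j - theta k = (thetas j - thetas k) - (rho - 1) * (thetas k - theta k).
    by rewrite mulrBl mul1r -heq; ring.
  rewrite /in_ID e.
  have /andP[b1 b2] := @bil _ _ _ _ _ _ _ hr (hB k).
  rewrite /c_l /c_u; apply/andP; split; lra.
have lin : exists (n : nat) (A : 'I_n -> 'I_K -> R) (b : 'I_n -> R),
      (n <= 2 * K + K * (K - 1))%N /\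
      forall t, JJ t <-> (forall r, \sum_(c < K) A r c * t c <= b r).
  exists #|{: T2 K}|.
  exists (fun r => (rowdata R K thetas nul nuu rhol rhou (enum_val r)).1).
  exists (fun r => (rowdata R K thetas nul nuu rhol rhou (enum_val r)).2).
  split.
    rewrite !card_sum card_prod !card_ord; lia.
  move=> t; rewrite /JJ J_rows; split.
    by move=> H r; apply/rowP.
  move=> H x; apply/rowP; have := H (enum_rank x); by rewrite enum_rankK.
split=> //; split=> //.
have [n [A [b [_ hAb]]]] := lin.
have convex : forall u l lam, JJ u -> JJ l -> 0 <= lam <= 1 ->
    JJ (fun c => lam * u c + (1 - lam) * l c).
  move=> u l lam /hAb hu /hAb hl /andP[l0 l1]; apply/hAb => r.
  rewrite (eq_bigr (fun c => lam * (A r c * u c) + (1 - lam) * (A r c * l c))); last first.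
    by move=> c _; ring.
  rewrite big_split /= -!mulr_sumr.
  have := hu r; have := hl r; move=> h1 h2.
  have : lam * (\sum_(i < K) A r i * u i) <= lam * b r by rewrite ler_wpM2l.
  have : (1 - lam) * (\sum_(i < K) A r i * l i) <= (1 - lam) * b r.
    by rewrite ler_wpM2l // subr_ge0.
  lra.
pose S c := [set y : R | exists t, JJ t /\ t c = y]%classic.
have S0 : forall c, (S c !=set0)%classic by move=> c; exists (theta c); exists theta.
have Sub : forall c, has_ubound (S c).
  move=> c; exists (thetas c - nul c); move=> y /= [t [[hI _] ety]]; rewrite -ety.
  by have /andP[] := hI c.
have Slb : forall c, has_lbound (S c).
  move=> c; exists (thetas c - nuu c); move=> y /= [t [[hI _] ety]]; rewrite -ety.
  by have /andP[] := hI c.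
pose u c := sup (S c).
pose l c := inf (S c).
have uub : forall c t, JJ t -> t c <= u c.
  by move=> c t Jt; apply: ub_le_sup => //; exists t.
have ule : forall c y, (forall t, JJ t -> t c <= y) -> u c <= y.
  by move=> c y H; apply: ge_sup => // z [t [Jt <-]]; apply: H.
have llb : forall c t, JJ t -> l c <= t c.
  by move=> c t Jt; apply: ge_inf => //; exists t.
have lge : forall c y, (forall t, JJ t -> y <= t c) -> y <= l c.
  by move=> c y H; apply: lb_le_inf => // z [t [Jt <-]]; apply: H.
have Ju : JJ u.
  split.
    move=> i; apply/andP; split.
      have /andP[h _] := Jtheta.1 i; exact: le_trans h (uub _ _ Jtheta).
    by apply: ule => t [hI _]; have /andP[] := hI i.
  move=> j k hjk; rewrite /in_ID; apply/andP; split.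
    have : u k <= u j - ((thetas j - thetas k) - c_u nul nuu rhol rhou j k).
      apply: ule => t Jt; have /andP[h1 h2] := Jt.2 j k hjk.
      have := uub j t Jt; lra.
    lra.
  have : u j <= u k + ((thetas j - thetas k) - c_l nul nuu rhol rhou j k).
    apply: ule => t Jt; have /andP[h1 h2] := Jt.2 j k hjk.
    have := uub k t Jt; lra.
  lra.
have Jl : JJ l.
  split.
    move=> i; apply/andP; split.
      by apply: lge => t [hI _]; have /andP[] := hI i.
    have /andP[_ h] := Jtheta.1 i; exact: le_trans (llb _ _ Jtheta) h.
  move=> j k hjk; rewrite /in_ID; apply/andP; split.
    have : l k + ((thetas j - thetas k) - c_u nul nuu rhol rhou j k) <= l j.
      apply: lge => t Jt; have /andP[h1 h2] := Jt.2 j k hjk.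
      have := llb k t Jt; lra.
    lra.
  have : l j - ((thetas j - thetas k) - c_l nul nuu rhol rhou j k) <= l k.
    apply: lge => t Jt; have /andP[h1 h2] := Jt.2 j k hjk.
    have := llb j t Jt; lra.
  lra.
move=> i; exists (l i), (u i).
split; first by exists l.
split; first by move=> t Jt; apply: llb.
split; first by exists u.
split; first by move=> t Jt; apply: uub.
move=> x; split.
  by move=> [t [Jt <-]]; rewrite llb // uub.
move=> /andP[h1 h2].
have [e|ne] := eqVneq (l i) (u i).
  by exists u; split=> //; apply/eqP; rewrite eq_le h2 -e h1.
have pos : 0 < u i - l i.
  by rewrite subr_gt0 lt_neqAle ne (le_trans h1 h2).
pose lam := (x - l i) / (u i - l i).
have hl0 : 0 <= lam.
  rewrite /lam divr_ge0 //; lra.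
have hl1 : lam <= 1.
  rewrite /lam ler_pdivrMr // mul1r; lra.
exists (fun c => lam * u c + (1 - lam) * l c); split.
  by apply: convex => //; rewrite hl0 hl1.
rewrite /lam; field; by rewrite lt0r_neq0.
Qed.
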